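(* Let $a,b>0$ with $ab<1$, let $\varphi\in\mathcal{B}_a$, $f\in\mathcal{B}_b$ and $\theta\ge0$. Then the function $g=\varphi(\Delta_\theta)f$ belongs to $\mathcal{B}_c$ with $c=b(1-ab)^{-1}$, and $$\|g\|_c\le(1-ab)^{-\theta}\|\varphi\|_a\|f\|_b.$$
   Context: For $b>0$ and entire $f$, $\|f\|_b=\sup_{k\in\mathbb{N}_0}b^{-k}|f^{(k)}(0)|$, and $\mathcal{B}_b=\{f \text{ entire}:\|f\|_b<\infty\}$. $\Delta_\theta$ is the operator $\Delta_\theta f=\theta f'+zf''$, and for entire $\varphi,f$, $\varphi(\Delta_\theta)f=\sum_{k=0}^\infty\sum_{m=0}^\infty\frac{\varphi^{(k)}(0)}{k!}\frac{f^{(m)}(0)}{m!}\Delta_\theta^kz^m$. *)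

(* Defs.v *)
From Stdlib Require Import Reals.
From Coquelicot Require Import Coquelicot.

Open Scope R_scope.

Definition entire (f : C -> C) : Prop := forall z : C, ex_derive f z.

Fixpoint Cderive_n (k : nat) (f : C -> C) : C -> C :=
  match k with
  | O => f
  | S k' => C_derive (Cderive_n k' f)
  end.

Definition Bseq (b : R) (f : C -> C) (k : nat) : R :=
  / (b ^ k) * Cmod (Cderive_n k f (RtoC 0)).

Definition normB (b : R) (f : C -> C) : R :=
  real (Lub_Rbar (fun x => exists k : nat, x = Bseq b f k)).

Definition inB (b : R) (f : C -> C) : Prop :=
  entire f /\ exists M : R, forall k : nat, Bseq b f k <= M.

Definition Delta (theta : R) (h : C -> C) : C -> C :=
  fun z => (RtoC theta * C_derive h z + z * C_derive (C_derive h) z)%C.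

Fixpoint Delta_pow (theta : R) (k : nat) (h : C -> C) : C -> C :=
  match k with
  | O => h
  | S k' => Delta theta (Delta_pow theta k' h)
  end.

Definition CSeries (u : nat -> C) : C :=
  (Series (fun n => Re (u n)), Series (fun n => Im (u n))).

Definition op_term (theta : R) (phi f : C -> C) (z : C) (k m : nat) : C :=
  (Cderive_n k phi (RtoC 0) / RtoC (INR (Factorial.fact k))
   * (Cderive_n m f (RtoC 0) / RtoC (INR (Factorial.fact m)))
   * Delta_pow theta k (fun w => Cpow w m) z)%C.

Definition op_inner (theta : R) (phi f : C -> C) (z : C) (k : nat) : C :=
  CSeries (op_term theta phi f z k).

Definition phi_Delta (theta : R) (phi f : C -> C) : C -> C :=
  fun z => CSeries (op_inner theta phi f z).

(* Main.v *)
Require Import Defs.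
From Stdlib Require Import Reals Lra Lia Psatz FunctionalExtensionality Factorial.
From Coquelicot Require Import Coquelicot.
Open Scope R_scope.

Lemma sum_n_fst (w : nat -> C) N : fst (sum_n w N) = sum_n (fun n => fst (w n)) N.
Proof.
  induction N. rewrite !sum_O. reflexivity.
  rewrite !sum_Sn. simpl. rewrite <- IHN. reflexivity.
Qed.
Lemma sum_n_snd (w : nat -> C) N : snd (sum_n w N) = sum_n (fun n => snd (w n)) N.
Proof.
  induction N. rewrite !sum_O. reflexivity.
  rewrite !sum_Sn. simpl. rewrite <- IHN. reflexivity.
Qed.

Lemma is_series_C_parts (w : nat -> C) (l : C) :
  is_series w l <-> (is_series (fun n => Re (w n)) (Re l) /\ is_series (fun n => Im (w n)) (Im l)).
Proof.
  unfold is_series. split.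
  - intro H. pose proof (proj1 (filterlim_locally (U:=C_UniformSpace) (sum_n w) l) H) as H0. clear H. rename H0 into H.
    split; apply (proj2 (filterlim_locally (U:=R_UniformSpace) _ _)); intro eps; specialize (H eps);
    eapply filter_imp; try exact H; intros N [H1 H2].
    + unfold Re. rewrite <- sum_n_fst. exact H1.
    + unfold Im. rewrite <- sum_n_snd. exact H2.
  - intros [H1 H2].
    pose proof (proj1 (filterlim_locally (U:=R_UniformSpace) _ _) H1) as H1'. clear H1. rename H1' into H1.
    pose proof (proj1 (filterlim_locally (U:=R_UniformSpace) _ _) H2) as H2'. clear H2. rename H2' into H2.
    apply (proj2 (filterlim_locally (U:=C_UniformSpace) (sum_n w) l)). intro eps.
    generalize (filter_and _ _ (H1 eps) (H2 eps)). apply filter_imp.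
    intros N [A B]. split.
    + change (ball (fst l) eps (fst (sum_n w N))). rewrite sum_n_fst. exact A.
    + change (ball (snd l) eps (snd (sum_n w N))). rewrite sum_n_snd. exact B.
Qed.

Lemma CSeries_correct (w : nat -> C) : ex_series w -> is_series w (CSeries w).
Proof.
  intros [l Hl]. pose proof Hl as H. apply is_series_C_parts in H as [H1 H2].
  apply is_series_unique in H1. apply is_series_unique in H2.
  replace (CSeries w) with l. exact Hl.
  unfold CSeries. destruct l as [x y]. unfold Re, Im in *. simpl in *. rewrite H1, H2. reflexivity.
Qed.

Lemma CSeries_unique (w : nat -> C) l : is_series w l -> CSeries w = l.
Proof.
  intro H. pose proof H as H'. apply is_series_C_parts in H' as [H1 H2].
  apply is_series_unique in H1. apply is_series_unique in H2.
  unfold CSeries. rewrite H1, H2. destruct l; reflexivity.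
Qed.

Lemma ex_series_C_parts (w : nat -> C) :
  ex_series (fun n => Re (w n)) -> ex_series (fun n => Im (w n)) -> ex_series w.
Proof.
  intros [a Ha] [b Hb]. exists (a, b). apply is_series_C_parts. split; assumption.
Qed.

Lemma Cmod_CSeries_le (w : nat -> C) (b : nat -> R) :
  (forall n, Cmod (w n) <= b n) -> ex_series b -> Cmod (CSeries w) <= Series b.
Proof.
  intros Hb Eb.
  assert (Ew : ex_series w).
  { apply (ex_series_le (K:=C_AbsRing) (V:=C_CompleteNormedModule)) with b.
    intro n. apply Hb. exact Eb. }
  apply CSeries_correct in Ew.
  apply Series_correct in Eb.
  assert (L1 : is_lim_seq (fun N => Cmod (sum_n w N)) (Cmod (CSeries w))).
  { unfold is_lim_seq. simpl.
    eapply filterlim_comp. exact Ew.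
    assert (Hn := filterlim_norm (K:=C_AbsRing) (V:=C_NormedModule) (CSeries w)).
    exact Hn. }
  assert (L2 : is_lim_seq (sum_n b) (Series b)) by exact Eb.
  assert (HP : forall N, Cmod (sum_n w N) <= sum_n b N).
  2: exact (is_lim_seq_le _ _ _ _ HP L1 L2).
  induction N.
  rewrite !sum_O. apply Hb.
  rewrite !sum_Sn. eapply Rle_trans. apply Cmod_triangle. apply Rplus_le_compat. exact IHN. apply Hb.
Qed.
Lemma is_derive_quad (f : C -> C) (z l : C) (K : R) :
  0 < K -> (forall h, Cmod h <= 1 -> Cmod (f (z+h) - f z - h*l)%C <= K * Cmod h ^ 2) ->
  is_derive f z l.
Proof.
  intros HK Hb. split.
  - apply is_linear_scal_l.
  - intros x Hx. assert (Ex : z = x) by exact (@is_filter_lim_locally_unique C_AbsRing (AbsRing_NormedModule C_AbsRing) z x Hx). subst x.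
    intro eps.
    assert (He : 0 < Rmin 1 (eps / K)).
    { apply Rmin_pos. lra. apply Rdiv_lt_0_compat. apply cond_pos. exact HK. }
    exists (mkposreal _ He). intros y Hy.
    change (Cmod (f y - f z - (y - z) * l)%C <= eps * Cmod (y - z)%C).
    change (Cmod (y - z)%C < Rmin 1 (eps / K)) in Hy.
    change C in y. set (h := (y - z)%C) in *.
    assert (Ey : y = (z + h)%C) by (unfold h; ring). rewrite Ey.
    assert (H1 : Cmod h <= 1) by (pose proof (Rmin_l 1 (eps/K)); lra).
    assert (H2 : Cmod h <= eps / K) by (pose proof (Rmin_r 1 (eps/K)); lra).
    eapply Rle_trans. apply Hb. exact H1.
    assert (H0 := Cmod_ge_0 h).
    assert (K * Cmod h <= eps).
    { apply (Rmult_le_compat_l K) in H2. 2: lra. field_simplify in H2. lra. lra. }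
    simpl. nra.
Qed.
Definition Dpow (n : nat) (z : C) : C := (RtoC (INR n) * Cpow z (n - 1))%C.

Lemma z_Dpow n z : (z * Dpow n z = RtoC (INR n) * Cpow z n)%C.
Proof.
  unfold Dpow. destruct n as [|p].
  - simpl. ring.
  - replace (S p - 1)%nat with p by lia. simpl Cpow. ring.
Qed.

Lemma Cmod_INR n : Cmod (RtoC (INR n)) = INR n.
Proof. rewrite Cmod_R. apply Rabs_pos_eq. apply pos_INR. Qed.

Lemma Dpow_bound n z : Cmod (Dpow n z) <= INR n * (1 + Cmod z) ^ n.
Proof.
  unfold Dpow. rewrite Cmod_mult, Cmod_INR, Cmod_pow.
  apply Rmult_le_compat_l. apply pos_INR.
  assert (H0 := Cmod_ge_0 z).
  destruct n as [|p]. simpl. lra.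
  replace (S p - 1)%nat with p by lia.
  apply Rle_trans with ((1 + Cmod z) ^ p).
  apply pow_incr. lra.
  simpl. rewrite <- (Rmult_1_l ((1 + Cmod z) ^ p)) at 1.
  apply Rmult_le_compat_r. apply pow_le. lra. lra.
Qed.

Lemma Epow_bound n z h : Cmod h <= 1 ->
  Cmod (Cpow (z+h) n - Cpow z n - h * Dpow n z)%C <= Cmod h ^ 2 * (INR n) ^ 2 * (1 + Cmod z) ^ n.
Proof.
  intro Hh. assert (Hz := Cmod_ge_0 z). assert (Hh0 := Cmod_ge_0 h).
  induction n as [|n IH].
  - unfold Dpow. simpl. replace (1 - 1 - h * (0 * 1))%C with (RtoC 0) by ring.
    rewrite Cmod_0. lra.
  - assert (Hid : (Cpow (z+h) (S n) - Cpow z (S n) - h * Dpow (S n) z)%C =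
       (h * h * Dpow n z + (z + h) * (Cpow (z+h) n - Cpow z n - h * Dpow n z))%C).
    { assert (HD : Dpow (S n) z = (RtoC (INR n) * Cpow z n + Cpow z n)%C).
      { unfold Dpow. replace (S n - 1)%nat with n by lia. rewrite S_INR, RtoC_plus. ring. }
      rewrite HD.
      transitivity ((h * h * Dpow n z + (z + h) * (Cpow (z+h) n - Cpow z n - h * Dpow n z))
                     + h * (z * Dpow n z - RtoC (INR n) * Cpow z n))%C.
      simpl Cpow. ring.
      rewrite z_Dpow. ring. }
    rewrite Hid.
    eapply Rle_trans. apply Cmod_triangle.
    rewrite !Cmod_mult.
    assert (Hzh : Cmod (z + h) <= 1 + Cmod z).
    { eapply Rle_trans. apply Cmod_triangle. lra. }
    assert (HD := Dpow_bound n z).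
    assert (HE := Cmod_ge_0 (Cpow (z + h) n - Cpow z n - h * Dpow n z)%C).
    assert (HDp := Cmod_ge_0 (Dpow n z)).
    set (T := 1 + Cmod z) in *.
    assert (HT : 1 <= T) by (unfold T; lra).
    assert (HTn : 0 <= T ^ n) by (apply pow_le; lra).
    assert (Hn := pos_INR n).
    rewrite S_INR. simpl pow. 
    set (E := Cmod (Cpow (z + h) n - Cpow z n - h * Dpow n z)%C) in *.
    set (hh := Cmod h) in *. set (D := Cmod (Dpow n z)) in *. set (N := INR n) in *.
    set (Tn := T ^ n) in *.
    assert (A1 : hh * hh * D <= hh * hh * (N * (T * Tn))).
    { apply Rmult_le_compat_l. nra. eapply Rle_trans. exact HD. apply Rmult_le_compat_l. lra. nra. }
    assert (A2 : Cmod (z + h) * E <= T * (hh * (hh * 1) * (N * (N * 1)) * Tn)).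
    { apply Rmult_le_compat; try lra. apply Cmod_ge_0. }
    assert (0 <= hh * hh * N * T * Tn) by (repeat apply Rmult_le_pos; lra).
    assert (0 <= hh * hh * T * Tn * (N + 1)) by (repeat apply Rmult_le_pos; lra).
    assert (Eq : hh * (hh * 1) * ((N + 1) * ((N + 1) * 1)) * (T * Tn) =
      hh * hh * (N * (T * Tn)) + T * (hh * (hh * 1) * (N * (N * 1)) * Tn) + hh * hh * T * Tn * (N + 1)) by ring.
    rewrite Eq. lra.
Qed.

Lemma is_derive_mono c n z : is_derive (fun w => c * Cpow w n)%C z (c * Dpow n z)%C.
Proof.
  apply is_derive_quad with (K := Cmod c * INR n ^ 2 * (1 + Cmod z) ^ n + 1).
  - assert (0 <= Cmod c * INR n ^ 2 * (1 + Cmod z) ^ n).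
    { assert (0 <= INR n ^ 2) by (apply pow_le, pos_INR).
      assert (0 <= (1 + Cmod z) ^ n) by (apply pow_le; generalize (Cmod_ge_0 z); lra).
      generalize (Cmod_ge_0 c). intro. 
      apply Rmult_le_pos. apply Rmult_le_pos; assumption. assumption. }
    lra.
  - intros h Hh.
    replace (c * Cpow (z + h) n - c * Cpow z n - h * (c * Dpow n z))%C
      with (c * (Cpow (z + h) n - Cpow z n - h * Dpow n z))%C by ring.
    rewrite Cmod_mult.
    eapply Rle_trans. apply Rmult_le_compat_l. apply Cmod_ge_0. apply Epow_bound. exact Hh.
    assert (0 <= Cmod h ^ 2) by (apply pow_le, Cmod_ge_0).
    nra.
Qed.

Lemma C_derive_mono c n : C_derive (fun w => c * Cpow w n)%C = (fun w => c * Dpow n w)%C.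
Proof.
  apply functional_extensionality. intro z. apply is_C_derive_unique. apply is_derive_mono.
Qed.

Lemma Delta_mono theta c n :
  Defs.Delta theta (fun w => c * Cpow w n)%C =
  (fun w => (c * RtoC (INR n * (theta + INR (n - 1)))%R) * Cpow w (n - 1))%C.
Proof.
  apply functional_extensionality. intro w. unfold Defs.Delta.
  rewrite C_derive_mono.
  assert (E : (fun w => c * Dpow n w)%C = (fun w => (c * RtoC (INR n)) * Cpow w (n - 1))%C).
  { apply functional_extensionality. intro x. unfold Dpow. ring. }
  rewrite E, C_derive_mono.
  transitivity (RtoC theta * (c * Dpow n w) + c * RtoC (INR n) * (w * Dpow (n - 1) w))%C.
  ring. rewrite z_Dpow. unfold Dpow. rewrite RtoC_mult, RtoC_plus. ring.
Qed.

Fixpoint Rk (theta : R) (k m : nat) : R :=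
  match k with
  | O => 1
  | S k' => Rk theta k' m * (INR (m - k') * (theta + INR (m - k' - 1)))
  end.

Lemma Delta_pow_mono theta k m :
  Delta_pow theta k (fun w => Cpow w m) = (fun w => RtoC (Rk theta k m) * Cpow w (m - k))%C.
Proof.
  induction k as [|k IH].
  - apply functional_extensionality. intro w. simpl. rewrite Nat.sub_0_r. ring.
  - simpl Delta_pow. rewrite IH, Delta_mono.
    apply functional_extensionality. intro w. simpl Rk.
    replace (m - S k)%nat with (m - k - 1)%nat by lia.
    rewrite (RtoC_mult (Rk theta k m)). reflexivity.
Qed.

Lemma ex_series_le_R (a b : nat -> R) :
  (forall n, 0 <= a n <= b n) -> ex_series b -> ex_series a.
Proof.
  intros H Eb. apply (ex_series_le (K:=R_AbsRing) (V:=R_CompleteNormedModule)) with b; auto.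
  intro n. change (Rabs (a n) <= b n). rewrite Rabs_pos_eq; apply H.
Qed.

Lemma exp_series_ex (x : R) : ex_series (fun n => x ^ n / INR (fact n)).
Proof.
  exists (exp x). assert (H := proj1 (is_pseries_R _ _ _) (is_exp_Reals x)).
  eapply is_series_ext. 2: exact H. intro n. simpl. unfold Rdiv. ring.
Qed.

Lemma INR_le_pow2 n : INR n <= 2 ^ n.
Proof.
  induction n. simpl. lra.
  rewrite S_INR. simpl. assert (1 <= 2 ^ n) by (apply pow_R1_Rle; lra). lra.
Qed.

Definition PSt (c : nat -> C) (z : C) (n : nat) : C := (c n * Cpow z n)%C.
Definition PS (c : nat -> C) (z : C) : C := CSeries (PSt c z).
Definition EC (c : nat -> C) : Prop :=
  exists M r, 0 <= r /\ forall n, Cmod (c n) <= M * r ^ n / INR (fact n).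

Lemma EC_M c M r : (forall n, Cmod (c n) <= M * r ^ n / INR (fact n)) -> 0 <= M.
Proof. intro H. specialize (H O). simpl in H. generalize (Cmod_ge_0 (c O)). lra. Qed.

Lemma EC_abs c x : EC c -> 0 <= x -> ex_series (fun n => Cmod (c n) * INR n ^ 2 * x ^ n).
Proof.
  intros [M [r [Hr H]]] Hx. assert (HM := EC_M _ _ _ H).
  apply ex_series_le_R with (fun n => M * ((4 * r * x) ^ n / INR (fact n))).
  2: { eapply ex_series_ext; [|apply (ex_series_scal (K:=R_AbsRing) (V:=R_NormedModule) M); apply exp_series_ex]. intro n; reflexivity. }
  intro n. split.
  - apply Rmult_le_pos. apply Rmult_le_pos. apply Cmod_ge_0. apply pow_le, pos_INR. apply pow_le. lra.
  - assert (H1 : INR n ^ 2 <= 4 ^ n).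
    { replace (4 ^ n) with (2 ^ n * 2 ^ n) by (rewrite <- Rpow_mult_distr; f_equal; lra).
      simpl. rewrite Rmult_1_r. assert (H0 := INR_le_pow2 n). assert (0 <= INR n) by apply pos_INR. nra. }
    assert (Hf := INR_fact_lt_0 n).
    rewrite !Rpow_mult_distr.
    specialize (H n).
    assert (0 <= INR n ^ 2) by (apply pow_le, pos_INR).
    assert (0 <= x ^ n) by (apply pow_le; lra).
    assert (0 <= r ^ n) by (apply pow_le; lra).
    apply Rle_trans with (M * r ^ n / INR (fact n) * 4 ^ n * x ^ n).
    + apply Rmult_le_compat_r. auto. apply Rmult_le_compat; auto. apply Cmod_ge_0.
    + right. field. lra.
Qed.

Lemma EC_abs0 c x : EC c -> 0 <= x -> ex_series (fun n => Cmod (c n) * x ^ n).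
Proof.
  intros [M [r [Hr H]]] Hx. assert (HM := EC_M _ _ _ H).
  apply ex_series_le_R with (fun n => M * ((r * x) ^ n / INR (fact n))).
  2: { eapply ex_series_ext; [|apply (ex_series_scal (K:=R_AbsRing) (V:=R_NormedModule) M); apply exp_series_ex]. intro n; reflexivity. }
  intro n. split.
  - apply Rmult_le_pos. apply Cmod_ge_0. apply pow_le. lra.
  - assert (Hf := INR_fact_lt_0 n). specialize (H n).
    assert (0 <= x ^ n) by (apply pow_le; lra).
    apply Rle_trans with (M * r ^ n / INR (fact n) * x ^ n).
    apply Rmult_le_compat_r; auto.
    rewrite Rpow_mult_distr. right. field. lra.
Qed.

Lemma PS_ex c z : EC c -> ex_series (PSt c z).
Proof.
  intro H. apply (ex_series_le (K:=C_AbsRing) (V:=C_CompleteNormedModule)) with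
    (fun n => Cmod (c n) * Cmod z ^ n).
  - intro n. change (Cmod (c n * Cpow z n)%C <= Cmod (c n) * Cmod z ^ n).
    rewrite Cmod_mult, Cmod_pow. lra.
  - apply EC_abs0. exact H. apply Cmod_ge_0.
Qed.

Lemma PS_is c z : EC c -> is_series (PSt c z) (PS c z).
Proof. intro H. apply CSeries_correct, PS_ex, H. Qed.

Definition dc (c : nat -> C) (n : nat) : C := (RtoC (INR (S n)) * c (S n))%C.

Lemma EC_dc c : EC c -> EC (dc c).
Proof.
  intros [M [r [Hr H]]]. exists (M * r), r. split. exact Hr. intro n.
  unfold dc. rewrite Cmod_mult, Cmod_INR.
  specialize (H (S n)). rewrite fact_simpl, mult_INR in H.
  assert (Hf := INR_fact_lt_0 n). assert (HS : 0 < INR (S n)) by (apply lt_0_INR; lia).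
  apply Rle_trans with (INR (S n) * (M * r ^ S n / (INR (S n) * INR (fact n)))).
  apply Rmult_le_compat_l; [lra | exact H].
  right. change (r ^ S n) with (r * r ^ n). field; lra.
Qed.

Lemma CSeries_ext (u w : nat -> C) : (forall n, u n = w n) -> CSeries u = CSeries w.
Proof.
  intro H. unfold CSeries. f_equal; apply Series_ext; intro n; rewrite H; reflexivity.
Qed.

Lemma is_series_C0 : is_series (fun _ : nat => RtoC 0) (RtoC 0).
Proof.
  apply is_series_C_parts. simpl. split;
  (unfold is_series; eapply filterlim_ext; [|apply filterlim_const];
   intro N; simpl; induction N; [rewrite sum_O; reflexivity| rewrite sum_Sn, <- IHN; simpl; unfold plus; simpl; ring]).
Qed.

Lemma PS_0 c : EC c -> PS c (RtoC 0) = c O.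
Proof.
  intro H. apply CSeries_unique.
  apply (is_series_decr_1 (K:=C_AbsRing) (V:=C_NormedModule)).
  match goal with |- is_series _ ?l => replace l with (RtoC 0) end.
  eapply is_series_ext. 2: exact is_series_C0.
  intro n. unfold PSt. simpl. ring.
  unfold PSt. simpl. change (RtoC 0 = (c O + - (c O * 1))%C). ring.
Qed.

Lemma PS_shift c z : EC c -> is_series (fun n => (c n * Dpow n z)%C) (PS (dc c) z).
Proof.
  intro H. apply (is_series_decr_1 (K:=C_AbsRing) (V:=C_NormedModule)).
  match goal with |- is_series _ ?l => replace l with (PS (dc c) z) end.
  - eapply is_series_ext. 2: apply PS_is, EC_dc, H.
    intro n. unfold PSt, dc, Dpow. replace (S n - 1)%nat with n by lia. match goal with |- ?x = ?y => change (@eq C x y) end; ring.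
  - unfold Dpow. simpl. change (PS (dc c) z = (PS (dc c) z + - (c O * (RtoC 0 * RtoC 1)))%C). ring.
Qed.

Lemma is_derive_PS c z : EC c -> is_derive (PS c) z (PS (dc c) z).
Proof.
  intro H.
  set (S := Series (fun n => Cmod (c n) * INR n ^ 2 * (1 + Cmod z) ^ n)).
  apply is_derive_quad with (K := Rabs S + 1).
  { generalize (Rabs_pos S). lra. }
  intros h Hh.
  assert (L : is_series (fun n => c n * (Cpow (z+h) n - Cpow z n - h * Dpow n z))%C
                (PS c (z+h) - PS c z - h * PS (dc c) z)%C).
  { assert (L1 := is_series_minus _ _ _ _ (PS_is c (z+h) H) (PS_is c z H)).
    assert (L2 := is_series_scal_l (K:=C_AbsRing) (V:=C_NormedModule) h _ _ (PS_shift c z H)).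
    assert (L3 := is_series_minus _ _ _ _ L1 L2).
    eapply is_series_ext. 2: exact L3.
    intro n. unfold PSt. change ((c n * Cpow (z + h) n + - (c n * Cpow z n)) + - (h * (c n * Dpow n z)) =
       c n * (Cpow (z + h) n - Cpow z n - h * Dpow n z))%C. ring. }
  rewrite <- (CSeries_unique _ _ L).
  assert (ES := EC_abs c (1 + Cmod z) H ltac:(generalize (Cmod_ge_0 z); lra)).
  eapply Rle_trans.
  apply Cmod_CSeries_le with (b := fun n => Cmod h ^ 2 * (Cmod (c n) * INR n ^ 2 * (1 + Cmod z) ^ n)).
  - intro n. rewrite Cmod_mult.
    eapply Rle_trans. apply Rmult_le_compat_l. apply Cmod_ge_0. apply Epow_bound. exact Hh.
    right. ring.
  - eapply ex_series_ext; [|apply (ex_series_scal (K:=R_AbsRing) (V:=R_NormedModule) (Cmod h ^ 2)); exact ES].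
    intro n; reflexivity.
  - rewrite Series_scal_l. fold S.
    assert (0 <= Cmod h ^ 2) by (apply pow_le, Cmod_ge_0).
    assert (S <= Rabs S + 1) by (generalize (Rle_abs S); lra).
    rewrite (Rmult_comm (Rabs S + 1)). apply Rmult_le_compat_l; lra.
Qed.

Lemma C_derive_PS c : EC c -> C_derive (PS c) = PS (dc c).
Proof.
  intro H. apply functional_extensionality. intro z. apply is_C_derive_unique, is_derive_PS, H.
Qed.

Fixpoint dcn (k : nat) (c : nat -> C) : nat -> C :=
  match k with O => c | S k' => dc (dcn k' c) end.

Lemma EC_dcn k c : EC c -> EC (dcn k c).
Proof. intro H. induction k; simpl. exact H. apply EC_dc, IHk. Qed.

Lemma Cderive_n_PS k c : EC c -> Cderive_n k (PS c) = PS (dcn k c).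
Proof.
  intro H. induction k. reflexivity.
  simpl. rewrite IHk. apply C_derive_PS, EC_dcn, H.
Qed.

Lemma dcn_val k c n :
  dcn k c n = (RtoC (INR (fact (n + k)) / INR (fact n)) * c (n + k)%nat)%C.
Proof.
  revert n. induction k; intro n.
  - simpl. rewrite Nat.add_0_r. replace (INR (fact n) / INR (fact n)) with 1.
    ring. field. apply INR_fact_neq_0.
  - simpl dcn. unfold dc. rewrite IHk.
    replace (S n + k)%nat with (n + S k)%nat by lia.
    rewrite Cmult_assoc, <- RtoC_mult. f_equal. f_equal.
    rewrite (fact_simpl n), mult_INR.
    assert (Hf := INR_fact_lt_0 n). assert (HS : 0 < INR (S n)) by (apply lt_0_INR; lia).
    field. lra.
Qed.

Lemma Cderive_n_PS_0 k c : EC c ->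
  Cderive_n k (PS c) (RtoC 0) = (RtoC (INR (fact k)) * c k)%C.
Proof.
  intro H. rewrite Cderive_n_PS by exact H. rewrite PS_0 by (apply EC_dcn, H).
  rewrite dcn_val. replace (0 + k)%nat with k by lia. f_equal. f_equal.
  change (fact 0) with 1%nat. simpl INR. field.
Qed.

Lemma sum_n_nonneg (a : nat -> R) N : (forall n, 0 <= a n) -> 0 <= sum_n a N.
Proof.
  intro H. induction N. rewrite sum_O. apply H.
  rewrite sum_Sn. change (0 <= sum_n a N + a (S N)). generalize (H (S N)). lra.
Qed.

Lemma bounded_series (a : nat -> R) M :
  (forall n, 0 <= a n) -> (forall N, sum_n a N <= M) -> ex_series a /\ Series a <= M.
Proof.
  intros H0 HM.
  assert (Inc : forall n, sum_n a n <= sum_n a (S n)).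
  { intro n. rewrite sum_Sn. change (sum_n a n <= sum_n a n + a (S n)). generalize (H0 (S n)). lra. }
  destruct (ex_finite_lim_seq_incr _ M Inc HM) as [l Hl].
  assert (E : ex_series a) by (exists l; exact Hl).
  split. exact E.
  rewrite (is_series_unique a l Hl).
  assert (H := is_lim_seq_le _ _ _ _ HM Hl (is_lim_seq_const M)). exact H.
Qed.

Lemma sum_le_Series (a : nat -> R) N :
  (forall n, 0 <= a n) -> ex_series a -> sum_n a N <= Series a.
Proof.
  intros H0 E. apply Series_correct in E.
  apply (is_lim_seq_incr_compare (sum_n a) (Series a) E).
  intro n. rewrite sum_Sn. change (sum_n a n <= sum_n a n + a (S n)). generalize (H0 (S n)). lra.
Qed.

Lemma term_le_Series (a : nat -> R) k :
  (forall n, 0 <= a n) -> ex_series a -> a k <= Series a.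
Proof.
  intros H0 E. eapply Rle_trans. 2: apply (sum_le_Series a k H0 E).
  destruct k. rewrite sum_O. lra.
  rewrite sum_Sn. change (a (S k) <= sum_n a k + a (S k)). generalize (sum_n_nonneg a k H0). lra.
Qed.

Lemma Series_nonneg (a : nat -> R) : (forall n, 0 <= a n) -> ex_series a -> 0 <= Series a.
Proof. intros H0 E. eapply Rle_trans. 2: apply (term_le_Series a 0 H0 E). apply H0. Qed.

Fixpoint rho (s : R) (k : nat) : R :=
  match k with O => 1 | S k' => s * rho (s + 1) k' end.

Lemma rho_nonneg s k : 0 <= s -> 0 <= rho s k.
Proof.
  revert s. induction k; intros s Hs; simpl. lra.
  apply Rmult_le_pos. exact Hs. apply IHk. lra.
Qed.

Definition Pb (N : nat) (s y : R) : R := sum_n (fun k => rho s k / INR (fact k) * y ^ k) N.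

Lemma Pb_S N s y : Pb (S N) s y = Pb N s y + rho s (S N) / INR (fact (S N)) * y ^ (S N).
Proof. unfold Pb. rewrite sum_Sn. reflexivity. Qed.

Lemma Pb_0 N s : Pb N s 0 = 1.
Proof.
  induction N. unfold Pb. rewrite sum_O. simpl. field.
  rewrite Pb_S, IHN. simpl. ring.
Qed.

Lemma Pb_derive N s y : derivable_pt_lim (fun t => Pb (S N) s t) y (s * Pb N (s + 1) y).
Proof.
  induction N.
  - assert (E : (fun t => Pb 1 s t) = (fun t => 1 + s * t)).
    { apply functional_extensionality. intro t. rewrite Pb_S. unfold Pb. rewrite sum_O. simpl. field. }
    rewrite E. unfold Pb. rewrite sum_O. simpl.
    replace (s * (1 / 1 * 1)) with (0 + s * 1) by field.
    apply derivable_pt_lim_plus. apply derivable_pt_lim_const.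
    apply derivable_pt_lim_scal. apply derivable_pt_lim_id.
  - assert (E : (fun t => Pb (S (S N)) s t) =
                (fun t => Pb (S N) s t + rho s (S (S N)) / INR (fact (S (S N))) * t ^ (S (S N)))).
    { apply functional_extensionality. intro t. apply Pb_S. }
    rewrite E, Pb_S.
    replace (s * (Pb N (s + 1) y + rho (s + 1) (S N) / INR (fact (S N)) * y ^ S N))
      with (s * Pb N (s + 1) y + rho s (S (S N)) / INR (fact (S (S N))) * (INR (S (S N)) * y ^ pred (S (S N)))).
    apply derivable_pt_lim_plus. exact IHN.
    apply derivable_pt_lim_scal. apply derivable_pt_lim_pow.
    simpl pred. change (rho s (S (S N))) with (s * rho (s + 1) (S N)).
    rewrite (fact_simpl (S N)), mult_INR.
    assert (Hf := INR_fact_lt_0 (S N)). assert (HS : 0 < INR (S (S N))) by (apply lt_0_INR; lia).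
    field. lra.
Qed.

Lemma Rpower_1m_derive s t : t < 1 ->
  derivable_pt_lim (fun u => Rpower (1 - u) (- s)) t (s * Rpower (1 - t) (- (s + 1))).
Proof.
  intro Ht.
  assert (H1 : derivable_pt_lim (fun u => 1 - u) t (0 - 1)).
  { apply derivable_pt_lim_minus. apply derivable_pt_lim_const. apply derivable_pt_lim_id. }
  assert (H2 := derivable_pt_lim_power (1 - t) (- s) ltac:(lra)).
  assert (H3 := derivable_pt_lim_comp (fun u => 1 - u) (fun x => Rpower x (- s)) t _ _ H1 H2).
  replace (s * Rpower (1 - t) (- (s + 1))) with (- s * Rpower (1 - t) (- s - 1) * (0 - 1)).
  exact H3. replace (- s - 1) with (- (s + 1)) by ring. ring.
Qed.

Lemma Rpower_ge1 x s : 0 <= x < 1 -> 0 <= s -> 1 <= Rpower (1 - x) (- s).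
Proof.
  intros Hx Hs. unfold Rpower.
  assert (ln (1 - x) <= 0). { rewrite <- ln_1. apply ln_le; lra. }
  eapply Rle_trans. 2: apply exp_ineq1_le. nra.
Qed.

Lemma binom_bound N s x : 0 <= s -> 0 <= x < 1 -> Pb N s x <= Rpower (1 - x) (- s).
Proof.
  revert s x. induction N; intros s x Hs Hx.
  - unfold Pb. rewrite sum_O. simpl. replace (1 / 1 * 1) with 1 by field. apply Rpower_ge1; auto.
  - set (D := fun t => Rpower (1 - t) (- s) - Pb (S N) s t).
    set (dD := fun t => s * Rpower (1 - t) (- (s + 1)) - s * Pb N (s + 1) t).
    assert (HD : forall c, Rabs (c - x / 2) <= x / 2 -> is_derive D c (dD c)).
    { intros c Hc. apply is_derive_Reals. unfold D, dD.
      apply derivable_pt_lim_minus. apply Rpower_1m_derive.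
      apply Rabs_le_between in Hc. lra. apply Pb_derive. }
    assert (Hpos : forall c, Rabs (c - x / 2) <= x / 2 -> 0 <= dD c).
    { intros c Hc. apply Rabs_le_between in Hc. unfold dD.
      assert (Pb N (s + 1) c <= Rpower (1 - c) (- (s + 1))) by (apply IHN; lra).
      nra. }
    destruct (MVT_cor4 D dD (x / 2) (x / 2) HD x) as [c1 [E1 B1]].
    { replace (x - x / 2) with (x / 2) by field. rewrite Rabs_pos_eq; lra. }
    destruct (MVT_cor4 D dD (x / 2) (x / 2) HD 0) as [c2 [E2 B2]].
    { replace (0 - x / 2) with (- (x / 2)) by field. rewrite Rabs_Ropp, Rabs_pos_eq; lra. }
    assert (HD0 : D 0 = 0).
    { unfold D. rewrite Pb_0. unfold Rpower. rewrite Rminus_0_r, ln_1, Rmult_0_r, exp_0. ring. }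
    assert (P1 : 0 <= dD c1). { apply Hpos. eapply Rle_trans. exact B1.
      replace (x - x / 2) with (x / 2) by field. rewrite Rabs_pos_eq; lra. }
    assert (P2 : 0 <= dD c2). { apply Hpos. eapply Rle_trans. exact B2.
      replace (0 - x / 2) with (- (x / 2)) by field. rewrite Rabs_Ropp, Rabs_pos_eq; lra. }
    assert (0 <= D x).
    { assert (D x - D (x / 2) >= 0) by (rewrite E1; replace (x - x / 2) with (x / 2) by field; nra).
      assert (D 0 - D (x / 2) <= 0) by (rewrite E2; replace (0 - x / 2) with (- (x / 2)) by field; nra).
      lra. }
    unfold D in H. lra.
Qed.

Lemma binom_series s x : 0 <= s -> 0 <= x < 1 ->
  ex_series (fun k => rho s k / INR (fact k) * x ^ k) /\
  Series (fun k => rho s k / INR (fact k) * x ^ k) <= Rpower (1 - x) (- s).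
Proof.
  intros Hs Hx. apply bounded_series.
  - intro n. apply Rmult_le_pos. apply Rdiv_le_0_compat. apply rho_nonneg, Hs. apply INR_fact_lt_0.
    apply pow_le. lra.
  - intro N. apply binom_bound; auto.
Qed.

Lemma ex_series_plus_R (a b : nat -> R) : ex_series a -> ex_series b -> ex_series (fun n => a n + b n).
Proof. intros A B. eapply ex_series_ext. 2: apply (ex_series_plus _ _ A B). intro n. reflexivity. Qed.
Lemma ex_series_minus_R (a b : nat -> R) : ex_series a -> ex_series b -> ex_series (fun n => a n - b n).
Proof. intros A B. eapply ex_series_ext. 2: apply (ex_series_minus _ _ A B). intro n. reflexivity. Qed.
Lemma ex_series_scal_R (c : R) (a : nat -> R) : ex_series a -> ex_series (fun n => c * a n).
Proof. intros A. eapply ex_series_ext. 2: apply (ex_series_scal (K:=R_AbsRing) (V:=R_NormedModule) c _ A). intro n. reflexivity. Qed.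

Lemma Series_sum_n (q : nat -> nat -> R) K :
  (forall k, ex_series (q k)) ->
  ex_series (fun n => sum_n (fun k => q k n) K) /\
  Series (fun n => sum_n (fun k => q k n) K) = sum_n (fun k => Series (q k)) K.
Proof.
  intro H. induction K.
  - split.
    + eapply ex_series_ext. 2: apply (H O). intro n. rewrite sum_O. reflexivity.
    + rewrite sum_O. apply Series_ext. intro n. rewrite sum_O. reflexivity.
  - destruct IHK as [E1 E2]. split.
    + eapply ex_series_ext. 2: apply (ex_series_plus _ _ E1 (H (S K))).
      intro n. rewrite sum_Sn. reflexivity.
    + rewrite sum_Sn. change (Series (fun n => sum_n (fun k => q k n) (S K)) =
        sum_n (fun k => Series (q k)) K + Series (q (S K))).
      rewrite <- E2. rewrite <- Series_plus by auto. apply Series_ext. intro n. rewrite sum_Sn. reflexivity.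
Qed.

Lemma tonelli (p : nat -> nat -> R) :
  (forall k n, 0 <= p k n) ->
  (forall n, ex_series (fun k => p k n)) ->
  ex_series (fun n => Series (fun k => p k n)) ->
  (forall k, ex_series (p k)) /\ ex_series (fun k => Series (p k)) /\
  Series (fun k => Series (p k)) = Series (fun n => Series (fun k => p k n)).
Proof.
  intros H0 H1 H2.
  set (w := fun n => Series (fun k => p k n)).
  assert (Hw : forall k n, p k n <= w n).
  { intros k n. apply (term_le_Series (fun k => p k n)). auto. auto. }
  assert (Ek : forall k, ex_series (p k)).
  { intro k. apply ex_series_le_R with w. intro n. split; auto. exact H2. }
  assert (HX : ex_series (fun k => Series (p k)) /\ Series (fun k => Series (p k)) <= Series w).
  { apply bounded_series.
    - intro k. apply Series_nonneg; auto.
    - intro K. destruct (Series_sum_n p K Ek) as [_ E]. rewrite <- E.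
      apply Series_le. 2: exact H2. intro n. split. apply sum_n_nonneg. auto.
      apply (sum_le_Series (fun k => p k n)). auto. auto. }
  destruct HX as [EX LX].
  split. exact Ek. split. exact EX.
  apply Rle_antisym. exact LX.
  apply Series_correct in H2 as Lw.
  assert (HB : forall N, sum_n w N <= Series (fun k => Series (p k))).
  { intro N.
    destruct (Series_sum_n (fun n k => p k n) N H1) as [_ E].
    unfold w. rewrite <- E.
    apply Series_le. 2: exact EX. intro k. split. apply sum_n_nonneg. auto.
    apply sum_le_Series. auto. auto. }
  assert (Lw' : is_lim_seq (sum_n w) (Series w)) by exact Lw.
  assert (H := is_lim_seq_le _ _ _ _ HB Lw' (is_lim_seq_const _)). exact H.
Qed.

Lemma fubini (u v : nat -> nat -> R) :
  (forall k n, Rabs (u k n) <= v k n) ->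
  (forall n, ex_series (fun k => v k n)) ->
  ex_series (fun n => Series (fun k => v k n)) ->
  (forall k, ex_series (u k)) /\ ex_series (fun k => Series (u k)) /\
  Series (fun k => Series (u k)) = Series (fun n => Series (fun k => u k n)).
Proof.
  intros Hb H1 H2.
  assert (Hv0 : forall k n, 0 <= v k n) by (intros k n; eapply Rle_trans; [apply Rabs_pos|apply Hb]).
  assert (Eu : forall n, ex_series (fun k => u k n)).
  { intro n. apply (ex_series_le (K:=R_AbsRing) (V:=R_CompleteNormedModule)) with (fun k => v k n).
    intro k. apply Hb. apply H1. }
  set (p := fun k n => u k n + v k n).
  assert (Hp0 : forall k n, 0 <= p k n).
  { intros k n. unfold p. generalize (Hb k n). intro H.
    apply Rabs_le_between in H. lra. }
  assert (Ep1 : forall n, ex_series (fun k => p k n)).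
  { intro n. apply ex_series_plus_R. apply Eu. apply H1. }
  assert (Ep2 : ex_series (fun n => Series (fun k => p k n))).
  { apply ex_series_le_R with (fun n => 2 * Series (fun k => v k n)).
    - intro n. split. apply Series_nonneg; auto.
      rewrite <- Series_scal_l. apply Series_le.
      intro k. split. auto. unfold p. generalize (Hb k n). intro H. apply Rabs_le_between in H. lra.
      eapply ex_series_ext; [|apply (ex_series_scal (K:=R_AbsRing) (V:=R_NormedModule) 2); apply H1].
      intro k; reflexivity.
    - eapply ex_series_ext; [|apply (ex_series_scal (K:=R_AbsRing) (V:=R_NormedModule) 2); apply H2].
      intro k; reflexivity. }
  destruct (tonelli p Hp0 Ep1 Ep2) as [Tp1 [Tp2 Tp3]].
  destruct (tonelli v Hv0 H1 H2) as [Tv1 [Tv2 Tv3]].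
  assert (Euk : forall k, ex_series (u k)).
  { intro k. eapply ex_series_ext. 2: apply (ex_series_minus_R _ _ (Tp1 k) (Tv1 k)).
    intro n. unfold p. match goal with |- ?x = ?y => change (@eq R x y) end; ring. }
  assert (Sk : forall k, Series (u k) = Series (p k) - Series (v k)).
  { intro k. rewrite <- Series_minus by auto. apply Series_ext. intro n. unfold p. ring. }
  assert (Sn : forall n, Series (fun k => u k n) = Series (fun k => p k n) - Series (fun k => v k n)).
  { intro n. rewrite <- Series_minus by auto. apply Series_ext. intro k. unfold p. ring. }
  split. exact Euk. split.
  - eapply ex_series_ext. 2: apply (ex_series_minus_R _ _ Tp2 Tv2).
    intro k. rewrite Sk. reflexivity.
  - rewrite (Series_ext _ _ Sk), (Series_ext _ _ Sn).
    rewrite !Series_minus by auto. rewrite Tp3, Tv3. reflexivity.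
Qed.

Lemma Rk_zero theta k m : (m < k)%nat -> Rk theta k m = 0.
Proof.
  induction k; intro H. lia.
  simpl. destruct (Nat.eq_dec m k) as [->|Hne].
  - rewrite Nat.sub_diag. simpl. ring.
  - rewrite IHk by lia. ring.
Qed.

Lemma Rk_closed theta k n :
  Rk theta k (k + n) = INR (fact (n + k)) / INR (fact n) * rho (theta + INR n) k.
Proof.
  revert n. induction k; intro n.
  - simpl. rewrite Nat.add_0_r. field. apply INR_fact_neq_0.
  - assert (E : Rk theta (S k) (S k + n) = Rk theta k (k + S n) * (INR (S n) * (theta + INR n))).
    { replace (S k + n)%nat with (k + S n)%nat by lia.
      change (Rk theta (S k) (k + S n)) with
        (Rk theta k (k + S n) * (INR (k + S n - k) * (theta + INR (k + S n - k - 1)))).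
      replace (k + S n - k)%nat with (S n) by lia. replace (S n - 1)%nat with n by lia. reflexivity. }
    rewrite E, IHk.
    change (rho (theta + INR n) (S k)) with ((theta + INR n) * rho (theta + INR n + 1) k).
    replace (S n + k)%nat with (n + S k)%nat by lia.
    rewrite S_INR. replace (theta + (INR n + 1)) with (theta + INR n + 1) by ring.
    rewrite (fact_simpl n), mult_INR, S_INR.
    assert (Hf := INR_fact_lt_0 n). assert (0 <= INR n) by apply pos_INR.
    field. lra.
Qed.

Lemma Rk_nonneg theta k n : 0 <= theta -> 0 <= Rk theta k (k + n).
Proof.
  intro H. rewrite Rk_closed. apply Rmult_le_pos. apply Rdiv_le_0_compat. apply pos_INR. apply INR_fact_lt_0.
  apply rho_nonneg. generalize (pos_INR n). lra.
Qed.

Lemma CSeries_shift (w : nat -> C) k :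
  (forall m, (m < k)%nat -> w m = RtoC 0) -> CSeries w = CSeries (fun j => w (k + j)%nat).
Proof.
  intro H. unfold CSeries. f_equal.
  apply (Series_incr_n_aux (fun n => Re (w n)) k). intros m Hm; rewrite (H m Hm); reflexivity.
  apply (Series_incr_n_aux (fun n => Im (w n)) k). intros m Hm; rewrite (H m Hm); reflexivity.
Qed.

Lemma re_le_Cmod' (c : C) : Rabs (Re c) <= Cmod c.
Proof. apply re_le_Cmod. Qed.
Lemma im_le_Cmod (c : C) : Rabs (Im c) <= Cmod c.
Proof. eapply Rle_trans. 2: apply Rmax_Cmod. apply Rmax_r. Qed.

Lemma normB_ub b f M : 0 < b -> (forall k, Bseq b f k <= M) ->
  (forall k, Bseq b f k <= normB b f) /\ normB b f <= M.
Proof.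
  intros Hb H. unfold normB.
  destruct (Lub_Rbar_correct (fun x => exists k : nat, x = Bseq b f k)) as [Hub Hlub].
  set (L := Lub_Rbar _) in *.
  assert (H1 : Rbar_le L M). { apply Hlub. intros x [k ->]. apply H. }
  assert (H2 : forall k, Rbar_le (Bseq b f k) L). { intro k. apply Hub. exists k. reflexivity. }
  destruct L as [l| |]; simpl in *.
  - split. intro k. apply (H2 k). exact H1.
  - contradiction.
  - exfalso. apply (H2 O).
Qed.

Lemma Bseq_nonneg b f k : 0 < b -> 0 <= Bseq b f k.
Proof.
  intro Hb. unfold Bseq. apply Rmult_le_pos. left. apply Rinv_0_lt_compat, pow_lt, Hb. apply Cmod_ge_0.
Qed.

Lemma inB_bound b f : 0 < b -> inB b f ->
  0 <= normB b f /\ forall k, Cmod (Cderive_n k f (RtoC 0)) <= normB b f * b ^ k.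
Proof.
  intros Hb [_ [M HM]]. destruct (normB_ub b f M Hb HM) as [H _].
  split. eapply Rle_trans. apply (Bseq_nonneg b f O Hb). apply H.
  intro k. specialize (H k). unfold Bseq in H.
  assert (Hp : 0 < b ^ k) by (apply pow_lt, Hb).
  apply (Rmult_le_compat_r (b ^ k)) in H. 2: lra.
  replace (/ b ^ k * Cmod (Cderive_n k f 0) * b ^ k) with (Cmod (Cderive_n k f 0)) in H.
  exact H. field. lra.
Qed.

Ltac cring := match goal with |- ?x = ?y => change (@eq C x y) end; ring.
Ltac rring := match goal with |- ?x = ?y => change (@eq R x y) end; ring.

Lemma CSeries_eq_parts (u w : nat -> C) :
  Series (fun n => Re (u n)) = Series (fun n => Re (w n)) ->
  Series (fun n => Im (u n)) = Series (fun n => Im (w n)) -> CSeries u = CSeries w.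
Proof. intros H1 H2. unfold CSeries. rewrite H1, H2. reflexivity. Qed.

Theorem proposition1p4 (a b theta : R) (phi f : C -> C) :
  0 < a -> 0 < b -> a * b < 1 ->
  inB a phi -> inB b f -> 0 <= theta ->
  (forall (z : C) (k : nat), ex_series (op_term theta phi f z k)) /\
  (forall z : C, ex_series (op_inner theta phi f z)) /\
  inB (b / (1 - a * b)) (phi_Delta theta phi f) /\
  normB (b / (1 - a * b)) (phi_Delta theta phi f)
    <= Rpower (1 - a * b) (- theta) * normB a phi * normB b f.
Proof.
  intros Ha Hb Hab Iphi If Hth.
  destruct (inB_bound a phi Ha Iphi) as [HA0 HA].
  destruct (inB_bound b f Hb If) as [HF0 HF].
  set (A := normB a phi) in *. set (F := normB b f) in *.
  set (x := a * b) in *. assert (Hx : 0 < x) by (unfold x; nra).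
  set (q := 1 - x). assert (Hq : 0 < q) by (unfold q; lra).
  set (c := b / q). assert (Hc : 0 < c) by (unfold c; apply Rdiv_lt_0_compat; lra).
  set (P := Rpower q (- theta)). assert (HP : 0 < P) by (unfold P, Rpower; apply exp_pos).
  set (phik := fun k => Cderive_n k phi (RtoC 0)).
  set (fk := fun m => Cderive_n m f (RtoC 0)).
  set (coef := fun n k => (phik k / RtoC (INR (fact k)) * (fk (k + n)%nat / RtoC (INR (fact (k + n)))) *
                           RtoC (Rk theta k (k + n)))%C).
  set (bnd := fun n k => A * F * (b ^ n / INR (fact n)) * (rho (theta + INR n) k / INR (fact k) * x ^ k)).
  assert (Hbnd0 : forall n k, 0 <= bnd n k).
  { intros n k. unfold bnd.
    assert (0 <= rho (theta + INR n) k) by (apply rho_nonneg; generalize (pos_INR n); lra).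
    assert (0 < INR (fact n)) by apply INR_fact_lt_0. assert (0 < INR (fact k)) by apply INR_fact_lt_0.
    assert (0 <= b ^ n) by (apply pow_le; lra). assert (0 <= x ^ k) by (apply pow_le; lra).
    apply Rmult_le_pos. apply Rmult_le_pos. apply Rmult_le_pos; auto.
    apply Rdiv_le_0_compat; auto.
    apply Rmult_le_pos; auto. apply Rdiv_le_0_compat; auto. }
  assert (Hcoef : forall n k, Cmod (coef n k) <= bnd n k).
  { intros n k. unfold coef, bnd.
    assert (Hfk := INR_fact_lt_0 k). assert (Hfn := INR_fact_lt_0 n).
    assert (Hfkn := INR_fact_lt_0 (k + n)).
    rewrite !Cmod_mult, !Cmod_div, !Cmod_INR, Cmod_R.
    2,3: intro E; apply RtoC_inj in E; apply (INR_fact_neq_0 _ E).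
    rewrite Rabs_pos_eq by (apply Rk_nonneg; exact Hth).
    rewrite Rk_closed. rewrite (Nat.add_comm n k).
    assert (H1 := HA k). assert (H2 := HF (k + n)%nat). fold (phik k) in H1. fold (fk (k + n)%nat) in H2.
    assert (Hr : 0 <= rho (theta + INR n) k) by (apply rho_nonneg; generalize (pos_INR n); lra).
    assert (E1 : Cmod (phik k) / INR (fact k) * (Cmod (fk (k + n)%nat) / INR (fact (k + n))) *
                 (INR (fact (k + n)) / INR (fact n) * rho (theta + INR n) k) =
                 (Cmod (phik k) * Cmod (fk (k + n)%nat)) * (rho (theta + INR n) k / (INR (fact k) * INR (fact n)))).
    { field. lra. }
    rewrite E1.
    apply Rle_trans with ((A * a ^ k * (F * b ^ (k + n))) * (rho (theta + INR n) k / (INR (fact k) * INR (fact n)))).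
    - apply Rmult_le_compat_r. apply Rdiv_le_0_compat. auto. nra.
      apply Rmult_le_compat; auto; apply Cmod_ge_0.
    - right. unfold x. rewrite pow_add, Rpow_mult_distr. field. lra. }
  assert (Hbs : forall n, ex_series (bnd n) /\ Series (bnd n) <= A * F * P * (c ^ n / INR (fact n))).
  { intro n.
    assert (Hs : 0 <= theta + INR n) by (generalize (pos_INR n); lra).
    destruct (binom_series (theta + INR n) x Hs ltac:(lra)) as [E1 E2].
    fold q in E2.
    split.
    - apply ex_series_scal_R with (c := A * F * (b ^ n / INR (fact n))) in E1. exact E1.
    - unfold bnd. rewrite Series_scal_l.
      assert (0 <= A * F * (b ^ n / INR (fact n))).
      { apply Rmult_le_pos. nra. apply Rdiv_le_0_compat. apply pow_le; lra. apply INR_fact_lt_0. }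
      eapply Rle_trans. apply Rmult_le_compat_l. exact H. exact E2.
      right. unfold P, c. rewrite Ropp_plus_distr, Rpower_plus, (Rpower_Ropp q (INR n)), Rpower_pow by exact Hq.
      unfold Rdiv. rewrite Rpow_mult_distr, pow_inv. field.
      split. apply INR_fact_neq_0. apply pow_nonzero. lra. }
  set (cg := fun n => CSeries (coef n)).
  assert (Ecoef : forall n, ex_series (coef n)).
  { intro n. apply (ex_series_le (K:=C_AbsRing) (V:=C_CompleteNormedModule)) with (bnd n).
    intro k. apply Hcoef. apply Hbs. }
  assert (Hcg : forall n, Cmod (cg n) <= A * F * P * (c ^ n / INR (fact n))).
  { intro n. eapply Rle_trans. apply Cmod_CSeries_le with (b := bnd n). apply Hcoef. apply Hbs. apply Hbs. }
  assert (ECcg : EC cg).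
  { exists (A * F * P), c. split. lra. intro n. eapply Rle_trans. apply Hcg. right. unfold Rdiv. ring. }
  assert (Hterm : forall z k m, op_term theta phi f z k m =
     (phik k / RtoC (INR (fact k)) * (fk m / RtoC (INR (fact m))) * (RtoC (Rk theta k m) * Cpow z (m - k)))%C).
  { intros z k m. unfold op_term. rewrite Delta_pow_mono. reflexivity. }
  assert (Hzero : forall z k m, (m < k)%nat -> op_term theta phi f z k m = RtoC 0).
  { intros z k m Hm. rewrite Hterm, Rk_zero by exact Hm. ring. }
  assert (HU : forall z k n, op_term theta phi f z k (k + n) = (coef n k * Cpow z n)%C).
  { intros z k n. rewrite Hterm. replace (k + n - k)%nat with n by lia. unfold coef. ring. }
  assert (Main : forall z, (forall k, ex_series (op_term theta phi f z k)) /\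
                           ex_series (op_inner theta phi f z) /\
                           phi_Delta theta phi f z = PS cg z).
  { intro z.
    set (U := fun k n => (coef n k * Cpow z n)%C).
    set (v := fun k n => bnd n k * Cmod z ^ n).
    assert (HUv : forall k n, Cmod (U k n) <= v k n).
    { intros k n. unfold U, v. rewrite Cmod_mult, Cmod_pow. apply Rmult_le_compat_r.
      apply pow_le, Cmod_ge_0. apply Hcoef. }
    assert (Hv1 : forall n, ex_series (fun k => v k n)).
    { intro n. unfold v. eapply ex_series_ext.
      2: apply (ex_series_scal_R (Cmod z ^ n) _ (proj1 (Hbs n))). intro k. simpl. ring. }
    assert (Hv2 : ex_series (fun n => Series (fun k => v k n))).
    { apply ex_series_le_R with (fun n => A * F * P * ((c * Cmod z) ^ n / INR (fact n))).
      - intro n. unfold v. rewrite Series_scal_r. split.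
        apply Rmult_le_pos. apply Series_nonneg. apply Hbnd0. apply Hbs. apply pow_le, Cmod_ge_0.
        apply Rle_trans with (A * F * P * (c ^ n / INR (fact n)) * Cmod z ^ n).
        apply Rmult_le_compat_r. apply pow_le, Cmod_ge_0. apply Hbs.
        right. rewrite Rpow_mult_distr. unfold Rdiv. ring.
      - apply ex_series_scal_R. apply exp_series_ex. }
    assert (FR := fubini (fun k n => Re (U k n)) v
                   (fun k n => Rle_trans _ _ _ (re_le_Cmod' _) (HUv k n)) Hv1 Hv2).
    assert (FI := fubini (fun k n => Im (U k n)) v
                   (fun k n => Rle_trans _ _ _ (im_le_Cmod _) (HUv k n)) Hv1 Hv2).
    destruct FR as [R1 [R2 R3]]. destruct FI as [I1 [I2 I3]].
    assert (EU : forall k, ex_series (U k)) by (intro k; apply ex_series_C_parts; auto).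
    assert (Hinner : forall k, op_inner theta phi f z k = CSeries (U k)).
    { intro k. unfold op_inner. rewrite (CSeries_shift _ k (Hzero z k)). apply CSeries_ext.
      intro n. apply HU. }
    assert (Hcol : forall n, CSeries (fun k => U k n) = (cg n * Cpow z n)%C).
    { intro n. apply CSeries_unique.
      assert (L := is_series_scal_l (K:=C_AbsRing) (V:=C_NormedModule) (Cpow z n) _ _
                     (CSeries_correct _ (Ecoef n))).
      replace (cg n * Cpow z n)%C with (Cpow z n * cg n)%C by ring.
      eapply is_series_ext; [|exact L]. intro k. unfold U. change (Cpow z n * coef n k = coef n k * Cpow z n)%C. ring. }
    split; [|split].
    - intro k. apply (proj2 (ex_series_incr_n (op_term theta phi f z k) k)).
      eapply ex_series_ext; [|apply (EU k)]. intro n. unfold U. rewrite HU. reflexivity.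
    - apply ex_series_ext with (fun k => CSeries (U k)). intro k. symmetry. apply Hinner.
      apply ex_series_C_parts.
      eapply ex_series_ext; [|exact R2]; intro k; reflexivity.
      eapply ex_series_ext; [|exact I2]; intro k; reflexivity.
    - unfold phi_Delta. rewrite (CSeries_ext _ _ Hinner).
      unfold PS, PSt. rewrite <- (CSeries_ext _ _ Hcol).
      apply CSeries_eq_parts.
      + transitivity (Series (fun k => Series (fun n => Re (U k n)))). apply Series_ext; intro; reflexivity.
        rewrite R3. apply Series_ext; intro; reflexivity.
      + transitivity (Series (fun k => Series (fun n => Im (U k n)))). apply Series_ext; intro; reflexivity.
        rewrite I3. apply Series_ext; intro; reflexivity. }
  assert (Hg : phi_Delta theta phi f = PS cg)
    by (apply functional_extensionality; intro z; apply Main).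
  set (M := P * A * F).
  assert (HB : forall k, Bseq c (phi_Delta theta phi f) k <= M).
  { intro k. unfold Bseq. rewrite Hg, Cderive_n_PS_0 by exact ECcg. rewrite Cmod_mult, Cmod_INR.
    assert (Hck := pow_lt c k Hc). assert (Hf := INR_fact_lt_0 k).
    apply Rle_trans with (/ c ^ k * (INR (fact k) * (A * F * P * (c ^ k / INR (fact k))))).
    apply Rmult_le_compat_l. left; apply Rinv_0_lt_compat; lra. apply Rmult_le_compat_l. lra. apply Hcg.
    right. unfold M. field. lra. }
  split. intros z k. apply Main. split. intro z. apply Main. split.
  - split. intro z. rewrite Hg. exists (PS (dc cg) z). apply is_derive_PS, ECcg. exists M. exact HB.
  - destruct (normB_ub _ _ M Hc HB) as [_ H]. unfold M in H. exact H.
Qed.
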